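(* Let $\mathbf w\in\mathbb R^m$. The positional voting method $B_{\mathbf w}$ is Pareto efficient if and only if $\mathbf w$ is strictly decreasing, i.e. $\mathbf w(1)>\mathbf w(2)>\cdots>\mathbf w(m)$.
   Context: Fix an integer $n\ge 2$ and a set $\mathbf C$ of $n$ candidates. Fix a composition $\lambda=(\lambda_1,\dots,\lambda_m)$ of $n$ (positive integers with $\sum_i\lambda_i=n$), write $[m]=\{1,\dots,m\}$. A ballot is a function $b:\mathbf C\to[m]$ with $|b^{-1}(i)|=\lambda_i$ for every $i$; $\mathbf C_\lambda$ denotes the set of ballots. The profile space is $P=\mathbb R^{\mathbf C_\lambda}$ with basis $\{\delta_b\}$ (indicator functions) and inner product $\mathbf p\cdot\mathbf q=\sum_b\mathbf p(b)\mathbf q(b)$. For $\mathbf w\in\mathbb R^m$ (a function $[m]\to\mathbb R$) and $X\in\mathbf C$, $\mathbf v_X\in P$ is $\mathbf v_X(b)=\mathbf w(b(X))$; the positional voting method $B_{\mathbf w}:P\to\mathbb R^{\mathbf C}$ is $B_{\mathbf w}(\mathbf p)(X)=\mathbf p\cdot\mathbf v_X$. A profile $\mathbf p$ prefers $X$ unanimously to $Y$ if $\mathbf p(b)\ge 0$ for every ballot with $b(X)<b(Y)$, $\mathbf p(b)\le0$ for every ballot with $b(X)>b(Y)$, and $\mathbf p(b)\neq0$ for at least one ballot with $b(X)\ne b(Y)$ (no condition on ballots with $b(X)=b(Y)$). A map $F:P\to\mathbb R^{\mathbf C}$ is Pareto efficient if for every ordered pair of distinct candidates $X,Y$ and every profile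 $\mathbf p$ preferring $X$ unanimously to $Y$, $F(\mathbf p)(X)>F(\mathbf p)(Y)$. *)

(* Defs.v *)
From HB Require Import structures.
From mathcomp Require Import all_boot all_order all_algebra.
Unset Strict Implicit.
Set Warnings "-notation-overridden -ambiguous-paths". Unset Printing Implicit Defensive.
Import Order.TTheory GRing.Theory Num.Theory.
Local Open Scope ring_scope.

(* Positions [m] = {1,...,m} are encoded as 'I_m = {0,...,m-1}; position 1 is ord 0. *)

Definition is_ballot (C : finType) (m : nat) (lam : 'I_m -> nat)
    (b : {ffun C -> 'I_m}) : bool :=
  [forall i : 'I_m, #|[set X | b X == i]| == lam i].
Arguments is_ballot {C m} lam b.

Definition ballot (C : finType) (m : nat) (lam : 'I_m -> nat) : finType :=
  {b : {ffun C -> 'I_m} | is_ballot lam b}.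
Arguments ballot C {m} lam.

Definition profile (R : realFieldType) (C : finType) (m : nat) (lam : 'I_m -> nat) :=
  ballot C lam -> R.
Arguments profile R C {m} lam.

Definition vX (R : realFieldType) (C : finType) (m : nat) (lam : 'I_m -> nat)
    (w : 'I_m -> R) (X : C) : profile R C lam :=
  fun b => w (val b X).
Arguments vX {R C m} lam w X.

Definition pdot (R : realFieldType) (C : finType) (m : nat) (lam : 'I_m -> nat)
    (p q : profile R C lam) : R :=
  \sum_(b : ballot C lam) p b * q b.
Arguments pdot {R C m lam} p q.

Definition positional (R : realFieldType) (C : finType) (m : nat) (lam : 'I_m -> nat)
    (w : 'I_m -> R) (p : profile R C lam) : C -> R :=
  fun X => pdot p (vX lam w X).
Arguments positional {R C m} lam w p X.

Definition prefers_unanimously (R : realFieldType) (C : finType) (m : nat)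
    (lam : 'I_m -> nat) (p : profile R C lam) (X Y : C) : Prop :=
  [/\ (forall b : ballot C lam, (val b X < val b Y)%N -> 0 <= p b),
      (forall b : ballot C lam, (val b Y < val b X)%N -> p b <= 0) &
      (exists b : ballot C lam, val b X != val b Y /\ p b != 0)].
Arguments prefers_unanimously {R C m lam} p X Y.

Definition pareto_efficient (R : realFieldType) (C : finType) (m : nat)
    (lam : 'I_m -> nat) (F : profile R C lam -> C -> R) : Prop :=
  forall X Y : C, X != Y -> forall p : profile R C lam,
    prefers_unanimously p X Y -> F p Y < F p X.
Arguments pareto_efficient {R C m lam} F.

Definition strictly_decreasing (R : realFieldType) (m : nat) (w : 'I_m -> R) : Prop :=
  forall i j : 'I_m, (i < j)%N -> w j < w i.
Arguments strictly_decreasing {R m} w.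

(* Main.v *)
Require Import Defs.
From HB Require Import structures.
From mathcomp Require Import all_boot all_order all_algebra all_fingroup.
Import Order.TTheory GRing.Theory Num.Theory.

Lemma count_s (m : nat) (lam : 'I_m -> nat) (a : pred 'I_m) :
  count a (flatten [seq nseq (lam i) i | i <- enum 'I_m]) = (\sum_(i < m) a i * lam i)%N.
Proof.
rewrite count_flatten -map_comp sumnE big_map big_enum /=.
by apply: eq_bigr => i _; rewrite /= count_nseq.
Qed.

Lemma card_fiber (C : finType) (m : nat) (s : seq 'I_m) (i0 : 'I_m) (k : 'I_m) :
  size s = #|C| ->
  #|[set X : C | nth i0 s (enum_rank X) == k]| = count (pred1 k) s.
Proof.
move=> hs.
rewrite cardsE -sum1_card -sum1_count.
rewrite (big_nth i0) big_mkord hs.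
rewrite (reindex (@enum_val C predT)) /=; last first.
  by exists (@enum_rank C) => x _; [exact: enum_valK | exact: enum_rankK].
by apply: eq_bigl => j; rewrite unfold_in /= enum_valK.
Qed.

Lemma ballot_exists (C : finType) (m : nat) (lam : 'I_m -> nat) (i0 : 'I_m) :
  (\sum_(i < m) lam i)%N = #|C| -> exists b : {ffun C -> 'I_m}, is_ballot lam b.
Proof.
move=> hs; set s := flatten [seq nseq (lam i) i | i <- enum 'I_m].
have ss : size s = #|C|.
  rewrite -count_predT count_s -hs; apply: eq_bigr => i _; by rewrite mul1n.
exists [ffun X => nth i0 s (enum_rank X)].
apply/forallP => k; apply/eqP.
rewrite (eq_finset (fun X => (nth i0 s (enum_rank X) == k))); last by move=> X; rewrite ffunE.
rewrite card_fiber // count_s (bigD1 k) //= eqxx mul1n big1 ?addn0 //.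
by move=> i /negbTE ->.
Qed.

Lemma ballot_perm (C : finType) (m : nat) (lam : 'I_m -> nat) (b : {ffun C -> 'I_m})
  (s : {perm C}) : is_ballot lam b -> is_ballot lam [ffun X => b (s X)].
Proof.
move=> /forallP h; apply/forallP => k; apply/eqP; rewrite -(eqP (h k)).
rewrite !cardsE -!sum1_card.
rewrite [RHS](reindex_inj (@perm_inj _ s)) /=.
by apply: eq_bigl => X; rewrite !unfold_in /= ffunE.
Qed.
From mathcomp Require Import lra.
Local Open Scope ring_scope.

Lemma keyineq (R : realFieldType) (a u v : R) :
  (u < v -> 0 <= a) -> (v < u -> a <= 0) -> a * u <= a * v /\ (a != 0 -> u != v -> a * u < a * v).
Proof.
move=> h1 h2; have [uv|vu|e] := ltgtP u v.
- have := h1 uv => ha; split; first nra.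
  move=> a0 _; have : 0 < a by rewrite lt0r a0 ha. nra.
- have := h2 vu => ha; split; first nra.
  move=> a0 _; have : a < 0 by rewrite lt_neqAle a0 ha. nra.
- by rewrite e; split=> // _; rewrite eqxx.
Qed.

Lemma reverse (R : realFieldType) (m : nat) (C : finType) (lam : 'I_m -> nat) (w : 'I_m -> R) :
  strictly_decreasing w -> pareto_efficient (@positional R C m lam w).
Proof.
move=> sd X Y _ p [h1 h2 [b0 [nb0 pb0]]].
rewrite /positional /pdot /vX.
have H : forall b : ballot C lam, p b * w (val b Y) <= p b * w (val b X) /\
   (p b != 0 -> val b X != val b Y -> p b * w (val b Y) < p b * w (val b X)).
  move=> b; have [] := (@keyineq R (p b)) (w (val b Y)) (w (val b X)).
  - move=> lt; apply: h1; rewrite ltnNge; apply/negP => le.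
    move: le; rewrite leq_eqVlt => /orP[/eqP e|le].
      by move: lt; rewrite (val_inj e) ltxx.
    by move: (sd _ _ le); rewrite lt_gtF.
  - move=> lt; apply: h2; rewrite ltnNge; apply/negP => le.
    move: le; rewrite leq_eqVlt => /orP[/eqP e|le].
      by move: lt; rewrite (val_inj e) ltxx.
    by move: (sd _ _ le); rewrite lt_gtF.
  move=> a1 a2; split=> // pb nb; apply: a2 => //.
  move: nb; rewrite neq_ltn => /orP[] lt; [rewrite lt_eqF // | rewrite gt_eqF //]; exact: sd.
rewrite (bigD1 b0) //= [X in _ < X](bigD1 b0) //=.
apply: ltr_leD; first by case: (H b0) => _; apply.
by apply: ler_sum => b _; case: (H b).
Qed.

Lemma fiber_elem (C : finType) (m : nat) (lam : 'I_m -> nat) (b : {ffun C -> 'I_m}) (k : 'I_m) :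
  is_ballot lam b -> (0 < lam k)%N -> exists X, b X = k.
Proof.
move=> /forallP /(_ k) /eqP h hk.
have : (0 < #|[set X | b X == k]|)%N by rewrite h.
by case/card_gt0P => X; rewrite inE => /eqP; exists X.
Qed.

Lemma forward (R : realFieldType) (m : nat) (C : finType) (lam : 'I_m -> nat)
  (hpos : forall i, (0 < lam i)%N) (hs : (\sum_(i < m) lam i)%N = #|C|) (h2 : (2 <= #|C|)%N)
  (w : 'I_m -> R) :
  pareto_efficient (@positional R C m lam w) -> strictly_decreasing w.
Proof.
move=> pe i j lij.
have [b0 hb0] := @ballot_exists C m lam i hs.
have /card_gt0P [X _] : (0 < #|C|)%N by apply: leq_trans h2.
have /card_gt0P [Y hY] : (0 < #|predC1 X|)%N by rewrite cardC1 -ltnS prednK //; apply: leq_trans h2.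
have hXY : X != Y by rewrite eq_sym; exact: hY.
have [X0 hX0] := @fiber_elem C m lam b0 i hb0 (hpos i).
pose b1 := [ffun Z => b0 (tperm X X0 Z)].
have hb1 : is_ballot lam b1 := @ballot_perm C m lam b0 (tperm X X0) hb0.
have b1X : b1 X = i by rewrite ffunE tpermL.
have [Y1 hY1] := @fiber_elem C m lam b1 j hb1 (hpos j).
pose b2 := [ffun Z => b1 (tperm Y Y1 Z)].
have hb2 : is_ballot lam b2 := @ballot_perm C m lam b1 (tperm Y Y1) hb1.
have hij : i != j by rewrite neq_ltn lij.
have b2Y : b2 Y = j by rewrite ffunE tpermL.
have b2X : b2 X = i.
  have hY1X : Y1 != X.
    by apply/eqP => e; move: hij; rewrite -b1X -e hY1 eqxx.
  have hYX : Y != X by rewrite eq_sym.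
  by rewrite ffunE (tpermD hYX hY1X).
clearbody b2.
pose bb : ballot C lam := exist _ b2 hb2.
pose p : profile R C lam := fun b => if b == bb then 1 else 0.
have ev : forall Z, positional lam w p Z = w (b2 Z).
  move=> Z; rewrite /positional /pdot /vX (bigD1 bb) //= big1 ?addr0.
    by rewrite /p eqxx mul1r.
  by move=> b /negbTE nb; rewrite /p nb mul0r.
have := pe X Y hXY p; rewrite !ev b2X b2Y; apply.
split.
- by move=> b _; rewrite /p; case: (b == bb).
- move=> b lt; rewrite /p; case: eqP => // eb.
  by move: lt; rewrite eb /= b2X b2Y ltnNge ltnW.
- exists bb; split; first by rewrite /= b2X b2Y.
  by rewrite /p eqxx oner_neq0.
Qed.

Theorem mainTheorem9 (R : realFieldType) (n m : nat) (C : finType)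
    (hn : (2 <= n)%N) (hC : #|C| = n)
    (lam : 'I_m -> nat) (hpos : forall i, (0 < lam i)%N)
    (hsum : (\sum_(i < m) lam i)%N = n)
    (w : 'I_m -> R) :
  pareto_efficient (@positional R C m lam w) <-> strictly_decreasing w.
Proof.
split; first by apply: forward => //; rewrite hC.
exact: reverse.
Qed.
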